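(* Let $n=2^\ell$, let $S=\{u_1,\dots,u_m\}\subseteq\mathbb{F}_2^d\setminus\{0\}$ be a set of $m$ distinct nonzero vectors, let $h:\mathbb{F}_2^d\to\mathbb{F}_2^\ell$ be a uniformly random linear map, fix $y\in\mathbb{F}_2^\ell$, let $Z_y:=|\{i:h(u_i)=y\}|$ and $\lambda:=m/n$. Then for every integer $a\ge1$, \[ \Pr[Z_y>2^a-2]\le\gamma^{-1}\lambda^a2^{-a^2}, \] where $\gamma:=\prod_{j=1}^\infty(1-2^{-j})$.
   Context: A uniformly random linear map is chosen uniformly among all linear maps $\mathbb{F}_2^d\to\mathbb{F}_2^\ell$. *)

(* Defs.v *)
From HB Require Import structures.
From mathcomp Require Import all_boot all_order all_algebra.
From mathcomp Require Import all_classical all_reals all_analysis.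
Set Implicit Arguments. Unset Strict Implicit. Unset Printing Implicit Defensive.
Import Order.TTheory GRing.Theory Num.Theory.
Local Open Scope ring_scope.

Definition gamma2 (R : realType) : R :=
  limn (fun N : nat => \prod_(1 <= j < N.+1) (1 - ((2 ^ j)%:R : R)^-1)).

(* A linear map h : F_2^d -> F_2^l is represented by a matrix A acting on
   row vectors: h u = u *m A.  Linear maps <-> matrices bijectively, so the
   uniform distribution on linear maps is the uniform (counting) distribution
   on 'M['F_2]_(d, l). *)
Definition lin_apply (d l : nat) (A : 'M['F_2]_(d, l)) (u : 'rV['F_2]_d)
  : 'rV['F_2]_l := u *m A.

Definition Zcount (d l : nat) (S : {set 'rV['F_2]_d}) (y : 'rV['F_2]_l)
  (A : 'M['F_2]_(d, l)) : nat := #|[set u in S | lin_apply A u == y]|.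

Definition prob_lin (R : realType) (d l : nat) (E : pred 'M['F_2]_(d, l)) : R :=
  (#|[set A : 'M['F_2]_(d, l) | E A]|%:R) / (#|{: 'M['F_2]_(d, l)}|%:R).

(* Main.v *)
Require Import Defs.
From HB Require Import structures.
From mathcomp Require Import all_boot all_order all_algebra.
From mathcomp Require Import all_classical all_reals all_analysis.
From mathcomp Require Import ring lra zify.
Import numFieldNormedType.Exports.
Set Implicit Arguments. Unset Strict Implicit. Unset Printing Implicit Defensive.
Import Order.TTheory GRing.Theory Num.Theory.
Local Open Scope ring_scope.

Notation F2 := 'F_2.

Lemma card_F2 : #|{: F2}| = 2%N.
Proof. by rewrite card_Fp. Qed.

Lemma card_mxF2 m n : #|{: 'M[F2]_(m, n)}| = (2 ^ (m * n))%N.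
Proof. by rewrite card_mx card_F2. Qed.

Lemma cardS_sum (T : finType) (Q : pred T) : #|[set x | Q x]| = (\sum_x (Q x : nat))%N.
Proof. by rewrite -sum1dep_card big_mkcond. Qed.

Lemma decomp k d (P : pred 'M[F2]_(1 + k, d)) :
  #|[set W | P W]| = (\sum_(U : 'M[F2]_(k, d)) #|[set v : 'rV[F2]_d | P (col_mx v U)]|)%N.
Proof.
rewrite -sum1dep_card.
rewrite (reindex (fun p : 'M[F2]_(k, d) * 'rV[F2]_d => col_mx p.2 p.1)) /=; last first.
  exists (fun W => (dsubmx W, usubmx W)) => [[U v] _|W _] /=.
    by rewrite col_mxKd col_mxKu.
  by rewrite vsubmxK.
rewrite -(pair_big_dep xpredT (fun U v => P (col_mx v U)) (fun _ _ => 1%N)) /=.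
by apply: eq_bigr => U _; rewrite sum1dep_card.
Qed.

Definition rowsin k d (T : {set 'rV[F2]_d}) (U : 'M[F2]_(k, d)) :=
  [forall i, row i U \in T].
Arguments rowsin {k d}.

Lemma rowsin_col k d (T : {set 'rV[F2]_d}) (v : 'rV[F2]_d) (U : 'M[F2]_(k, d)) :
  rowsin T (@col_mx F2 1 k d v U) = (v \in T) && rowsin T U.
Proof.
apply/forallP/andP => [H|[vT /forallP UT] i].
  split; first by have := H (lshift k ord0); rewrite rowKu row_id.
  by apply/forallP => i; have := H (rshift 1 i); rewrite rowKd.
by rewrite -(@fintype.splitK 1 k i); case: (fintype.split i) => j /=; rewrite ?rowKu ?rowKd ?row_id ?(ord1 j).
Qed.

Lemma free_col k d (v : 'rV[F2]_d) (U : 'M[F2]_(k, d)) :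
  row_free U -> ~~ (v <= U)%MS -> row_free (@col_mx F2 1 k d v U).
Proof.
move=> fU vU; apply: inj_row_free => x.
rewrite -[x]hsubmxK mul_row_col.
set c := lsubmx x; set r := rsubmx x => H.
have c0 : c 0 0 = 0.
  apply/eqP; apply: contraNT vU => cn0.
  have -> : v = (c 0 0)^-1 *: (c *m v).
    have e : c *m v = c 0 0 *: v by rewrite {1}[c]mx11_scalar mul_scalar_mx.
    by rewrite e scalerA mulVf // scale1r.
  apply: scalemx_sub.
  have -> : c *m v = - (r *m U) by apply/eqP; rewrite -addr_eq0 H.
  by rewrite eqmx_opp submxMl.
have c00 : c = 0 by apply/matrixP => i j; rewrite !ord1 c0 mxE.
move: H; rewrite c00 mul0mx add0r => H.
have -> : r = 0 by apply: (row_free_inj fU); rewrite H mul0mx.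
by rewrite row_mx0.
Qed.

Lemma card_span k d (U : 'M[F2]_(k, d)) :
  row_free U -> #|[set v : 'rV[F2]_d | (v <= U)%MS]| = (2 ^ k)%N.
Proof.
move=> fU.
have -> : [set v : 'rV[F2]_d | (v <= U)%MS] = [set x *m U | x in [set: 'rV[F2]_k]].
  apply/setP => v; rewrite inE; apply/submxP/imsetP => [[x ->]|[x _ ->]];
    by exists x.
by rewrite card_imset ?cardsT ?card_mxF2 ?mul1n //; apply: row_free_inj.
Qed.

Lemma lb_good d (T : {set 'rV[F2]_d}) k : 0 \notin T ->
  (\prod_(i < k) (#|T| + 1 - 2 ^ i) <=
   #|[set U : 'M[F2]_(k, d) | row_free U && rowsin T U]|)%N.
Proof.
move=> T0; elim: k => [|k IH].
  rewrite big_ord0 card_gt0; apply/set0Pn; exists 0; rewrite inE.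
  apply/andP; split; last by apply/forallP => -[].
  by rewrite -row_leq_rank.
rewrite big_ord_recr /=.
set G := [set U : 'M[F2]_(k, d) | row_free U && rowsin T U] in IH *.
set c := (#|T| + 1 - 2 ^ k)%N.
have -> : [set U : 'M[F2]_(k.+1, d) | row_free U && rowsin T U] =
   [set U : 'M[F2]_(1 + k, d) | row_free U && rowsin T U] by [].
rewrite decomp.
apply: (@leq_trans (#|G| * c)); first by rewrite leq_mul2r IH orbT.
rewrite -sum_nat_const (big_mkcond (fun U => U \in G)) /=.
apply: leq_sum => U _; case: ifP => // UG.
move: UG; rewrite inE => /andP[fU rU].
set Sp := [set v : 'rV[F2]_d | (v <= U)%MS].
apply: (@leq_trans #|T :\: Sp|).
  rewrite cardsD.
  have h1 : (#|T :&: Sp| <= 2 ^ k - 1)%N.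
    rewrite -(card_span fU) -/Sp (cardsD1 0 Sp) inE sub0mx add1n /=.
    rewrite subn1 /=.
    apply: subset_leq_card; apply/fintype.subsetP => v; rewrite !inE => /andP[vT ->].
    by rewrite andbT; apply: contraNneq T0 => <-.
  have h2 : (0 < 2 ^ k)%N by rewrite expn_gt0.
  rewrite /c; lia.
apply: subset_leq_card; apply/fintype.subsetP => v; rewrite !inE => /andP[vS vT].
by rewrite free_col // rowsin_col vT rU.
Qed.

Lemma card_rowsin d (S : {set 'rV[F2]_d}) k :
  #|[set U : 'M[F2]_(k, d) | rowsin S U]| = (#|S| ^ k)%N.
Proof.
elim: k => [|k IH].
  rewrite expn0; apply/eqP; rewrite eqn_leq; apply/andP; split.
    by apply: (leq_trans (max_card _)); rewrite card_mxF2.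
  rewrite card_gt0; apply/set0Pn; exists 0; rewrite inE.
  by apply/forallP => -[].
have -> : [set U : 'M[F2]_(k.+1, d) | rowsin S U] =
   [set U : 'M[F2]_(1 + k, d) | rowsin S U] by [].
rewrite decomp expnS -IH mulnC -sum_nat_const [RHS]big_mkcond /=.
apply: eq_bigr => U _; rewrite inE.
under eq_finset => v do rewrite rowsin_col.
case: (rowsin S U) => /=.
  by under eq_finset => v do rewrite andbT; rewrite cardsE.
by under eq_finset => v do rewrite andbF; rewrite cards0.
Qed.

Lemma fiber a d l (U : 'M[F2]_(a, d)) (Y : 'M[F2]_(a, l)) : row_free U ->
  (#|[set A : 'M[F2]_(d, l) | U *m A == Y]| * 2 ^ (a * l) = #|{: 'M[F2]_(d, l)}|)%N.
Proof.
move=> fU.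
have fib Y' : #|[set A : 'M[F2]_(d, l) | U *m A == Y']| = #|[set A : 'M[F2]_(d, l) | U *m A == 0]|.
  case/row_freeP: fU => V UV; set A0 := V *m Y'.
  have -> : [set A | U *m A == Y'] = [set A0 + B | B in [set A : 'M[F2]_(d, l) | U *m A == 0]].
    apply/setP => A; rewrite inE; apply/eqP/imsetP => [UA|[B]].
      exists (A - A0); last by rewrite addrC subrK.
      by rewrite inE mulmxBr UA /A0 mulmxA UV mul1mx subrr.
    by rewrite inE => /eqP UB ->; rewrite mulmxDr UB addr0 /A0 mulmxA UV mul1mx.
  by rewrite card_imset //; exact: addrI.
have -> : #|{: 'M[F2]_(d, l)}| =
    (\sum_(Y' : 'M[F2]_(a, l)) #|[set A : 'M[F2]_(d, l) | U *m A == Y']|)%N.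
  rewrite -sum1_card (partition_big (fun A => U *m A) xpredT) //=.
  apply: eq_bigr => Y' _; rewrite sum1dep_card.
  by congr #|_|; apply/setP => A; rewrite !inE.
rewrite (eq_bigr _ (fun Y' _ => fib Y')) sum_nat_const (fib Y) mulnC.
by congr (_ * _)%N; rewrite -(card_mxF2 a l); apply: eq_card.
Qed.

Lemma main_nat d l (S : {set 'rV[F2]_d}) (y : 'rV[F2]_l) a : 0 \notin S ->
  (#|[set A : 'M[F2]_(d, l) | (2 ^ a - 2 < Zcount S y A)%N]| *
    \prod_(i < a) (2 ^ a - 2 ^ i) * 2 ^ (a * l) <= #|S| ^ a * #|{: 'M[F2]_(d, l)}|)%N.
Proof.
move=> S0.
set E := [set A : 'M[F2]_(d, l) | (2 ^ a - 2 < Zcount S y A)%N].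
set P := (\prod_(i < a) (2 ^ a - 2 ^ i))%N.
set Y : 'M[F2]_(a, l) := \matrix_(i < a) y.
set Tup := [set U : 'M[F2]_(a, d) | row_free U && rowsin S U].
pose N A := #|[set U | (U \in Tup) && (U *m A == Y)]|.
have stepA A : A \in E -> (P <= N A)%N.
  rewrite inE /Zcount => HZ.
  set TA := [set u in S | lin_apply A u == y] in HZ.
  have T0 : 0 \notin TA by rewrite inE negb_and S0.
  apply: (@leq_trans (\prod_(i < a) (#|TA| + 1 - 2 ^ i))).
    by apply: leq_prod => i _; apply: leq_sub2r; lia.
  apply: (leq_trans (@lb_good d TA a T0)).
  apply: subset_leq_card; apply/fintype.subsetP => U; rewrite !inE => /andP[fU /forallP rU].
  rewrite fU /=; apply/andP; split.
    by apply/forallP => i; have := rU i; rewrite inE => /andP[].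
  apply/eqP/row_matrixP => i; rewrite row_mul rowK.
  by have := rU i; rewrite inE => /andP[_ /eqP].
have key : ((\sum_A N A) * 2 ^ (a * l) = #|Tup| * #|{: 'M[F2]_(d, l)}|)%N.
  rewrite (eq_bigr (fun A => \sum_U ((U \in Tup) && (U *m A == Y) : nat))%N); last first.
    by move=> A _; rewrite /N cardS_sum.
  rewrite exchange_big big_distrl /= -sum_nat_const [RHS]big_mkcond.
  apply: eq_bigr => U _; case: ifP => UT /=.
    rewrite -(@fiber a d l U Y); last by move: UT; rewrite inE => /andP[].
    by rewrite cardS_sum.
  by rewrite big1 // => A _; rewrite UT.
apply: (@leq_trans ((\sum_A N A) * 2 ^ (a * l))).
  rewrite leq_mul2r; apply/orP; right.
  apply: (@leq_trans (\sum_(A in E) N A)); last first.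
    by rewrite [X in (_ <= X)%N](bigID (fun A => A \in E)) /= leq_addr.
  by rewrite -sum_nat_const; apply: leq_sum => A; apply: stepA.
rewrite key leq_mul2r; apply/orP; right.
rewrite -(card_rowsin S a); apply: subset_leq_card.
by apply/fintype.subsetP => U; rewrite !inE => /andP[].
Qed.
Section G.
Variable R : realType.
Definition gp (N : nat) : R := \prod_(1 <= j < N.+1) (1 - ((2 ^ j)%:R : R)^-1).

Lemma gpS N : gp N.+1 = gp N * (1 - ((2 ^ N.+1)%:R : R)^-1).
Proof. by rewrite /gp big_nat_recr. Qed.

Lemma inv2_pos k : 0 < ((2 ^ k)%:R : R)^-1.
Proof. by rewrite invr_gt0 ltr0n expn_gt0. Qed.

Lemma inv2_S k : ((2 ^ k.+1)%:R : R)^-1 = ((2 ^ k)%:R)^-1 / 2.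
Proof. by rewrite expnS natrM invfM mulrC. Qed.

Lemma inv2_le1 k : ((2 ^ k.+1)%:R : R)^-1 <= 1/2.
Proof.
elim: k => [|k IH]; first by rewrite expn1 div1r.
rewrite inv2_S; have := inv2_pos k.+1; lra.
Qed.

Lemma gp_lb N : 1/4 + ((2 ^ N.+2)%:R : R)^-1 <= gp N.+1.
Proof.
elim: N => [|N IH].
  rewrite gpS /gp big_geq // expn1 mul1r; rewrite (_ : 2 ^ 2 = 4)%N //.
  lra.
rewrite gpS; set q := ((2 ^ N.+2)%:R : R)^-1 in IH *.
have q0 : 0 < q := inv2_pos _.
have q1 : q <= 1/4.
  rewrite /q inv2_S; have := inv2_le1 N; have := inv2_pos N.+1; lra.
rewrite inv2_S -/q; nra.
Qed.

Lemma gp_ge0 N : 0 <= gp N.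
Proof.
case: N => [|N]; first by rewrite /gp big_geq.
have := gp_lb N; have := inv2_pos N.+2; lra.
Qed.

Lemma gp_q n : 1/4 <= gp n.
Proof.
case: n => [|n]; first by rewrite /gp big_geq //; lra.
have := gp_lb n; have := inv2_pos n.+2; lra.
Qed.

Lemma gp_noninc : nonincreasing_seq gp.
Proof.
apply/nonincreasing_seqP => n; rewrite gpS.
have := gp_ge0 n; have := inv2_pos n.+1; nra.
Qed.

Lemma gp_cvg : cvgn gp.
Proof.
apply: (@nonincreasing_is_cvgn R gp); first exact: gp_noninc.
exists 0 => _ [n _ <-]; exact: gp_ge0.
Qed.

Lemma gamma2_le a : gamma2 R <= gp a.
Proof. exact: (nonincreasing_cvgn_ge gp_noninc gp_cvg). Qed.

Lemma gamma2_gt0 : 0 < gamma2 R.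
Proof.
apply: (@lt_le_trans _ _ (1/4)); first lra.
rewrite /gamma2 -/gp; apply: limr_ge; first exact: gp_cvg.
by near=> n; apply: gp_q.
Unshelve. all: by end_near.
Qed.
End G.

Lemma prod_id (R : realType) a :
  (((\prod_(i < a) (2 ^ a - 2 ^ i))%N)%:R : R) = (2 ^ (a * a))%:R * gp R a.
Proof.
rewrite natr_prod.
rewrite (eq_bigr (fun i : 'I_a => (2 ^ a)%:R * (1 - ((2 ^ (a - i))%:R : R)^-1))); last first.
  move=> i _; have ia := ltn_ord i.
  rewrite natrB; last by rewrite leq_pexp2l // ltnW.
  have h : (2 ^ a = 2 ^ i * 2 ^ (a - i))%N by rewrite -expnD subnKC // ltnW.
  rewrite mulrBr mulr1; congr (_ - _); rewrite h natrM mulfK //.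
rewrite big_split /= prodr_const card_ord -natrX -expnM.
congr (_ * _).
rewrite -(big_mkord xpredT (fun i => 1 - ((2 ^ (a - i))%:R : R)^-1)) big_nat_rev /=.
rewrite /gp big_add1 /=.
apply: eq_big_nat => i /andP[_ ia].
by rewrite add0n subKn.
Qed.

Theorem corollaryB2 (R : realType) (d l : nat) (S : {set 'rV['F_2]_d})
  (y : 'rV['F_2]_l) (a : nat) :
  (0 : 'rV['F_2]_d) \notin S ->
  (1 <= a)%N ->
  prob_lin R (fun A => (2 ^ a - 2 < Zcount S y A)%N)
    <= (gamma2 R)^-1 * ((#|S|%:R / (2 ^ l)%:R) ^+ a) * ((2 ^ (a * a))%:R)^-1.
Proof.
move=> S0 a1.
have H := main_nat y a S0.
set e := #|[set A : 'M[F2]_(d, l) | (2 ^ a - 2 < Zcount S y A)%N]| in H.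
set M := #|{: 'M[F2]_(d, l)}| in H.
have HR : (e%:R * ((2 ^ (a * a))%:R * gp R a) * (2 ^ (a * l))%:R <= (#|S| ^ a)%:R * M%:R :> R).
  by rewrite -prod_id -!natrM ler_nat.
rewrite /prob_lin -/e -/M.
have g0 := gamma2_gt0 R.
have gle := gamma2_le R a.
have M0 : (0 < M%:R :> R) by rewrite ltr0n /M card_mxF2 expn_gt0.
have p0 : (0 < (2 ^ (a * a))%:R :> R) by rewrite ltr0n expn_gt0.
have q0 : (0 < (2 ^ (a * l))%:R :> R) by rewrite ltr0n expn_gt0.
have -> : ((#|S|%:R / (2 ^ l)%:R) ^+ a : R) = (#|S| ^ a)%:R / (2 ^ (a * l))%:R.
  by rewrite expr_div_n -!natrX -expnM mulnC.
have e0 : (0 <= e%:R :> R) by [].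
set s := ((#|S| ^ a)%:R : R) in HR *.
set p := ((2 ^ (a * a))%:R : R) in HR p0 *.
set q := ((2 ^ (a * l))%:R : R) in HR q0 *.
set g := gamma2 R in g0 gle *.
set ga := gp R a in HR gle.
have key : e%:R <= s * M%:R / (p * g * q).
  rewrite ler_pdivlMr; last by rewrite !mulr_gt0.
  apply: le_trans HR.
  have h1 : 0 <= e%:R * p * q by rewrite !mulr_ge0 // ltW.
  have h2 : 0 <= (e%:R * p * q) * (ga - g) by rewrite mulr_ge0 // subr_ge0.
  nra.
rewrite ler_pdivrMr //; apply: (le_trans key); rewrite le_eqVlt; apply/orP; left.
apply/eqP; field.
by rewrite !gt_eqF.
Qed.
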